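(* Let $\mathcal C$ be a 3-cell template with SZS-pair $(h_0,h_1)$, $N=|\mathcal E|$, and write $\xi<_\iota\eta$ iff $h_\iota^{-1}(\xi)<h_\iota^{-1}(\eta)$. Then for each $\iota\in\{0,1\}$ the barycenter $\mathcal O$ lies strictly between the endpoints of each polar arc of $h_\iota$ in the order of $h_{1-\iota}$, i.e. $\mathbf N<_{1-\iota}\mathcal O<_{1-\iota}h_\iota(2)$ and $h_\iota(N-1)<_{1-\iota}\mathcal O<_{1-\iota}\mathbf S$.
   Context: 3-cell template: a finite regular cell complex $\mathcal C=\bigcup_{v\in\mathcal E}c_v$ (cells labelled by barycenters $v$) with (i) $\mathcal C=\mathrm{clos}\,c_{\mathcal O}=S^2\dot\cup c_{\mathcal O}$ for a single 3-cell; (ii) a bipolar orientation of the 1-skeleton (acyclic, unique vertex $\mathbf N$ without incoming, unique vertex $\mathbf S$ without outgoing edges) with two disjoint directed meridian paths $\mathbf{WE},\mathbf{EW}$ from $\mathbf N$ to $\mathbf S$ (as sets: their vertices and edges other than the poles), splitting $S^2$ into open hemispheres $\mathbf W,\mathbf E$; (iii) edges in $\mathbf W$ oriented towards, in $\mathbf E$ away from, their meridian endpoints other than $\mathbf N,\mathbf S$; (iv) the faces $\mathbf{NE}\subset\mathbf W$, $\mathbf{SW}\subset\mathbf E$ whose boundaries contain the first, last edge of $\mathbf{WE}$ share an edge of $\mathbf{WE}$, and the faces $\mathbf{NW}\subset\mathbf W$, $\mathbf{SE}\subset\mathbf E$ adjacent to the first, last edge of $\mathbf{EW}$ share an edge of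 $\mathbf{EW}$. Let $w^0_-,w^1_-,w^0_+,w^1_+$ be the barycenters of $\mathbf{NE},\mathbf{NW},\mathbf{SE},\mathbf{SW}$. ZS/SZ-pairs of a planar bipolar disk complex drawn with $\mathbf N$ on top: each face boundary splits into left and right directed paths from minimum to maximum; $h_0$ traverses each face barycenter from the right-path edge at the minimum to the left-path edge at the maximum, $h_1$ from the left-path edge at the minimum to the right-path edge at the maximum, and otherwise the Hamiltonian paths $h_\iota$ from $\mathbf N$ to $\mathbf S$ follow the bipolar orientation (ZS-pair); $(h_0,h_1)$ is SZ if $(h_1,h_0)$ is ZS. SZS-pair of $\mathcal C$: bijections $h_0,h_1:\{1,\dots,N\}\to\mathcal E$ such that (i) with both closed hemispheres drawn with $\mathbf N$ on top in the orientation induced by the sphere viewed from outside ($\mathbf{WE}$ = right boundary of $\mathrm{clos}\,\mathbf W$ and left boundary of $\mathrm{clos}\,\mathbf E$), the induced orders of $h_0,h_1$ on $\mathrm{clos}\,\mathbf W$ form its SZ-pair and on $\mathrm{clos}\,\mathbf E$ its ZS-pair; (ii) each $h_\iota$ traverses $w^\iota_-,\mathcal O,w^\iota_+$ consecutively. In particular $h_\iota(1)=\mathbf N$, $h_\iota(N)=\mathbf S$. *)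

(* Defs.v *)
From mathcomp Require Import all_boot.
Set Implicit Arguments.
Unset Strict Implicit.
Unset Printing Implicit Defensive.

(*  The boundary sphere S^2 = C minus c_O is given as a combinatorial map:    *)
(*  darts (half-edges) Dart, the edge involution alpha, and the rotation      *)
(*  sigma listing the darts around each vertex counterclockwise as seen from  *)
(*  OUTSIDE the ball.  Vertices / edges / faces are the finite types Vx / Eg /*)
(*  Fc, with vert d = vertex at which dart d starts, edg d = edge of d, and   *)
(*  fac d = the face lying to the RIGHT of d (viewed from outside), d being   *)
(*  read as directed from vert d to vert (alpha d).  The face to the left of  *)
(*  d is fac (alpha d).  fwd d says the bipolar orientation directs the edge  *)
(*  of d from vert d to vert (alpha d).  vN, vS are the poles; WE, EW are the *)
(*  two meridians, given as the lists of their (forward) darts from N to S.  *)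
Record tdata := TData {
  Dart : finType; Vx : finType; Eg : finType; Fc : finType;
  alpha : Dart -> Dart; sigma : Dart -> Dart;
  vert : Dart -> Vx; edg : Dart -> Eg; fac : Dart -> Fc;
  fwd : Dart -> bool;
  vN : Vx; vS : Vx;
  WE : seq Dart; EW : seq Dart }.

Section Template.
Variable T : tdata.
Local Notation D := (Dart T).
Local Notation alpha := (@alpha T).
Local Notation sigma := (@sigma T).
Local Notation vert := (@vert T).
Local Notation edg := (@edg T).
Local Notation fac := (@fac T).
Local Notation fwd := (@fwd T).

(* The cells of C, labelled by their barycenters: vertices, edges, faces of  *)
(* the boundary sphere, and the single 3-cell O.                              *)
Definition cell : finType := ((Vx T + Eg T) + (Fc T + unit))%type.
Definition CV (v : Vx T) : cell := inl (inl v).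
Definition CE (e : Eg T) : cell := inl (inr e).
Definition CF (f : Fc T) : cell := inr (inl f).
Definition CO : cell := inr (inr tt).

(* Face permutation: following it keeps the face on the right. *)
Definition phi (d : D) : D := sigma (alpha d).

Record regular_sphere : Prop := {
  sigma_inj : injective sigma;
  alphaK : forall d, alpha (alpha d) = d;
  alpha_fix : forall d, alpha d <> d;
  vert_surj : forall v, exists d, vert d = v;
  edg_surj : forall e, exists d, edg d = e;
  fac_surj : forall f, exists d, fac d = f;
  vert_orbit : forall d d', vert d = vert d' <-> fconnect sigma d d';
  edg_orbit : forall d d', edg d = edg d' <-> (d' = d \/ d' = alpha d);
  fac_orbit : forall d d', fac d = fac d' <-> fconnect phi d d';
  map_connected : forall d d',
      connect (fun x y => (y == alpha x) || (y == sigma x)) d d';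
  euler_sphere : #|Vx T| + #|Fc T| = #|Eg T| + 2;
  (* regularity: closed edges are arcs, closed faces are closed disks *)
  no_loop : forall d, vert (alpha d) <> vert d;
  face_simple : forall d d', fac d = fac d' -> vert d = vert d' -> d = d'
}.

Definition arc : rel (Vx T) :=
  fun u v => [exists d, [&& fwd d, vert d == u & vert (alpha d) == v]].

Record bipolar : Prop := {
  fwd_alpha : forall d, fwd (alpha d) = ~~ fwd d;
  acyclic : forall d, fwd d -> ~~ connect arc (vert (alpha d)) (vert d);
  source_N : forall v, (forall d, fwd d -> vert (alpha d) <> v) <-> v = vN T;
  sink_S : forall v, (forall d, fwd d -> vert d <> v) <-> v = vS T
}.

Definition dpath (p : seq D) (u v : Vx T) : Prop :=
  match p with
  | [::] => False
  | d :: p' => [/\ vert d = u, all fwd p,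
                  path (fun x y => vert (alpha x) == vert y) d p'
                & vert (alpha (last d p')) = v]
  end.

Definition merD (d : D) : bool := (d \in WE T) || (d \in EW T).
Definition merE (e : Eg T) : bool := [exists d, merD d && (edg d == e)].
Definition merV (v : Vx T) : bool :=
  [exists d, merD d && ((vert d == v) || (vert (alpha d) == v))].
Definition merV_int (v : Vx T) : bool := [&& merV v, v != vN T & v != vS T].

Definition fadj : rel (Fc T) :=
  fun f g => [exists d, [&& fac d == f, fac (alpha d) == g & ~~ merE (edg d)]].

(* Open hemispheres.  Viewed from outside with N on top, W lies to the west *)
(* of WE, i.e. to the right of the (downward) directed darts of WE, and E   *)
(* to their left.                                                           *)
Definition inWf (f : Fc T) : bool := [exists d, (d \in WE T) && connect fadj (fac d) f].
Definition inEf (f : Fc T) : bool :=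
  [exists d, (d \in WE T) && connect fadj (fac (alpha d)) f].
Definition inWe (e : Eg T) : bool :=
  ~~ merE e && [exists d, (edg d == e) && inWf (fac d)].
Definition inEe (e : Eg T) : bool :=
  ~~ merE e && [exists d, (edg d == e) && inEf (fac d)].
Definition inWv (v : Vx T) : bool :=
  ~~ merV v && [exists d, (vert d == v) && inWf (fac d)].
Definition inEv (v : Vx T) : bool :=
  ~~ merV v && [exists d, (vert d == v) && inEf (fac d)].

Definition closW (c : cell) : bool :=
  match c with
  | inl (inl v) => merV v || inWv v
  | inl (inr e) => merE e || inWe e
  | inr (inl f) => inWf f
  | inr (inr _) => false
  end.
Definition closE (c : cell) : bool :=
  match c with
  | inl (inl v) => merV v || inEv v
  | inl (inr e) => merE e || inEe e
  | inr (inl f) => inEf f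
  | inr (inr _) => false
  end.

Record template : Prop := {
  t_sphere : regular_sphere;
  t_bipolar : bipolar;
  t_WE : dpath (WE T) (vN T) (vS T);
  t_EW : dpath (EW T) (vN T) (vS T);
  t_disj_e : forall d d', d \in WE T -> d' \in EW T -> edg d <> edg d';
  t_disj_v : forall d d', d \in WE T -> d' \in EW T ->
               vert (alpha d) = vert (alpha d') -> vert (alpha d) = vS T;
  t_W_towards : forall d, fwd d -> inWe (edg d) -> ~~ merV_int (vert d);
  t_E_away : forall d, fwd d -> inEe (edg d) -> ~~ merV_int (vert (alpha d));
  (* (iv): NE (in W, at the first edge of WE) and SW (in E, at the last edge *)
  (* of WE) share an edge of WE; NW (in W, at the first edge of EW) and SE   *)
  (* (in E, at the last edge of EW) share an edge of EW.                     *)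
  t_NE_SW : forall d1 dk, ohead (WE T) = Some d1 -> ohead (rev (WE T)) = Some dk ->
      exists2 d, d \in WE T & fac d = fac d1 /\ fac (alpha d) = fac (alpha dk);
  t_NW_SE : forall e1 em, ohead (EW T) = Some e1 -> ohead (rev (EW T)) = Some em ->
      exists2 d, d \in EW T & fac (alpha d) = fac (alpha e1) /\ fac d = fac em
}.

(* For a face f: the right path consists of the directed edges having f on   *)
(* their right, the left path of those having f on their left (N on top,    *)
(* viewed from outside).  bottom f v: v is the extremal vertex of the face   *)
(* boundary at the S-side (no boundary edge of f leaves v); top f v: the     *)
(* extremal vertex at the N-side (no boundary edge of f enters v).           *)
Definition onbd (f : Fc T) (d : D) : bool := (fac d == f) || (fac (alpha d) == f).
Definition fbottom (f : Fc T) (v : Vx T) : Prop :=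
  forall d, fwd d -> onbd f d -> vert d <> v.
Definition ftop (f : Fc T) (v : Vx T) : Prop :=
  forall d, fwd d -> onbd f d -> vert (alpha d) <> v.

Definition right_bot (f : Fc T) (e : Eg T) : Prop :=
  exists d, [/\ fwd d, edg d = e, fac d = f & fbottom f (vert (alpha d))].
Definition left_bot (f : Fc T) (e : Eg T) : Prop :=
  exists d, [/\ fwd d, edg d = e, fac (alpha d) = f & fbottom f (vert (alpha d))].
Definition right_top (f : Fc T) (e : Eg T) : Prop :=
  exists d, [/\ fwd d, edg d = e, fac d = f & ftop f (vert d)].
Definition left_top (f : Fc T) (e : Eg T) : Prop :=
  exists d, [/\ fwd d, edg d = e, fac (alpha d) = f & ftop f (vert d)].

(* Admissible consecutive steps of a Hamiltonian path.  z = true: the "Z"  *)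
(* path h_0 of a ZS-pair (faces crossed from the right-path edge at the     *)
(* face's S-side extremum to the left-path edge at its N-side extremum);    *)
(* z = false: the "S" path h_1 (left to right).  Otherwise the path follows *)
(* the bipolar orientation: vertex -> outgoing edge -> its head vertex.     *)
Definition step (z : bool) (x y : cell) : Prop :=
  match x, y with
  | inl (inl v), inl (inr e) => exists d, [/\ fwd d, vert d = v & edg d = e]
  | inl (inr e), inl (inl v) => exists d, [/\ fwd d, edg d = e & vert (alpha d) = v]
  | inl (inr e), inr (inl f) => if z then right_bot f e else left_bot f e
  | inr (inl f), inl (inr e) => if z then left_top f e else right_top f e
  | _, _ => False
  end.

Definition ham_path (X : pred cell) (z : bool) (t : seq cell) : Prop :=
  [/\ uniq t, (forall c, (c \in t) = X c),
      ohead t = Some (CV (vN T)), ohead (rev t) = Some (CV (vS T)) &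
      forall i, i.+1 < size t -> step z (nth CO t i) (nth CO t i.+1)].

Definition ZS_pair (X : pred cell) (t0 t1 : seq cell) : Prop :=
  ham_path X true t0 /\ ham_path X false t1.
Definition SZ_pair (X : pred cell) (t0 t1 : seq cell) : Prop := ZS_pair X t1 t0.

(* A bijection h : {1..N} -> cells is encoded by its list of values           *)
(* [h(1); ...; h(N)] (a duplicate-free enumeration of all cells).            *)
Definition SZS_pair (h0 h1 : seq cell) : Prop :=
  [/\ uniq h0 /\ uniq h1, (forall c, c \in h0) /\ (forall c, c \in h1),
      SZ_pair closW [seq c <- h0 | closW c] [seq c <- h1 | closW c],
      ZS_pair closE [seq c <- h0 | closE c] [seq c <- h1 | closE c] &
      (* w^0_- = NE, w^1_- = NW, w^0_+ = SE, w^1_+ = SW *)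
      forall d1 dk e1 em,
        ohead (WE T) = Some d1 -> ohead (rev (WE T)) = Some dk ->
        ohead (EW T) = Some e1 -> ohead (rev (EW T)) = Some em ->
        infix [:: CF (fac d1); CO; CF (fac em)] h0 /\
        infix [:: CF (fac (alpha e1)); CO; CF (fac (alpha dk))] h1].

Definition before (h : seq cell) (x y : cell) : bool := index x h < index y h.

End Template.

(* Main.v *)
Require Import Defs.
From mathcomp Require Import all_boot all_algebra zify.
Set Implicit Arguments.
Unset Strict Implicit.
Unset Printing Implicit Defensive.

Section Geo.
Variable T : tdata.
Hypothesis tmp : template T.
Local Notation D := (Dart T).
Local Notation alpha := (@alpha T).
Local Notation sigma := (@sigma T).
Local Notation vert := (@vert T).
Local Notation edg := (@edg T).
Local Notation fac := (@fac T).
Local Notation fwd := (@fwd T).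
Local Notation merE := (@merE T).
Local Notation merD := (@merD T).
Local Notation fadj := (@fadj T).
Local Notation arc := (@Defs.arc T).
Local Notation inWf := (@inWf T).
Local Notation inEf := (@inEf T).

Lemma sph : regular_sphere T. Proof. exact: t_sphere tmp. Qed.
Lemma bip : bipolar T. Proof. exact: t_bipolar tmp. Qed.

Lemma aK d : alpha (alpha d) = d. Proof. exact: (alphaK sph). Qed.
Lemma fwdA d : fwd (alpha d) = ~~ fwd d. Proof. exact: (fwd_alpha bip). Qed.
Lemma vert_sigma d : vert (sigma d) = vert d.
Proof. by apply/esym/(vert_orbit sph); apply: fconnect1. Qed.
Lemma fac_sigma z : fac (sigma z) = fac (alpha z).
Proof.
apply/esym/(fac_orbit sph).
have -> : sigma z = phi (alpha z) by rewrite /phi aK.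
exact: fconnect1.
Qed.
Lemma edg_alpha d : edg (alpha d) = edg d.
Proof. by apply/esym/(edg_orbit sph); right. Qed.
Lemma edg_eq d d' : edg d' = edg d -> d' = d \/ d' = alpha d.
Proof. by move=> h; apply/(edg_orbit sph). Qed.
Lemma fwd_edge d d' : fwd d -> fwd d' -> edg d' = edg d -> d' = d.
Proof.
move=> fd fd' /edg_eq [//|E]; by move: fd'; rewrite E fwdA fd.
Qed.
Lemma merE_dart z : merE (edg z) -> merD z \/ merD (alpha z).
Proof.
case/existsP=> m /andP [mm /eqP em].
by case: (edg_eq em) => E; rewrite E in mm; [left|right].
Qed.
Lemma merE_of z : merD z -> merE (edg z).
Proof. by move=> h; apply/existsP; exists z; rewrite h eqxx. Qed.
Lemma merE_ofA z : merD (alpha z) -> merE (edg z).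
Proof. by move=> h; apply/existsP; exists (alpha z); rewrite h edg_alpha eqxx. Qed.

Lemma fadj_sym f g : fadj f g -> fadj g f.
Proof.
case/existsP=> d /and3P [/eqP fd /eqP fad nm]; apply/existsP; exists (alpha d).
by rewrite aK fd fad edg_alpha nm !eqxx.
Qed.
Lemma conn_sym f g : connect fadj f g -> connect fadj g f.
Proof.
move=> h; have : connect_sym fadj by apply: sym_connect_sym => x y; apply/idP/idP; apply: fadj_sym.
by move=> cs; rewrite cs.
Qed.

Lemma rot_chain x n :
  (forall i, 0 < i <= n -> ~~ merE (edg (iter i sigma x))) ->
  connect fadj (fac (iter n.+1 sigma x)) (fac (alpha x)).
Proof.
elim: n => [|n IH] H.
  by rewrite /= fac_sigma connect0.
apply: connect_trans (IH _); last first.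
  by move=> i /andP [i0 iin]; apply: H; rewrite i0 (leq_trans iin).
apply: connect1; set y := iter n.+1 sigma x.
rewrite [iter _ _ _]/= -/y fac_sigma; apply/existsP; exists (alpha y).
by rewrite aK edg_alpha !eqxx H //= ltnSn.
Qed.

Lemma rot x y : x != y -> fconnect sigma x y ->
  (forall z, fconnect sigma x z -> merE (edg z) -> z = x \/ z = y) ->
  connect fadj (fac y) (fac (alpha x)).
Proof.
move=> xy cxy H; have ky := iter_findex cxy; have kmax := findex_max cxy.
move: ky kmax; case E: (findex sigma x y) => [|n] ky kmax.
  by move: xy; rewrite -ky eqxx.
rewrite -ky; apply: rot_chain => i /andP [i0 iin].
apply/negP => m; case: (H _ (fconnect_iter _ _ _) m) => e.
  have : findex sigma x (iter i sigma x) = i by rewrite findex_iter // (ltn_trans _ kmax) // ltnS.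
  by rewrite e findex0 => i0'; move: i0; rewrite -i0'.
have : findex sigma x (iter i sigma x) = i by rewrite findex_iter // (ltn_trans _ kmax) // ltnS.
by rewrite e E => ni; move: iin; rewrite -ni ltnn.
Qed.


Lemma notheadN d : fwd d -> vert (alpha d) <> vN T.
Proof. exact: (source_N bip (vN T)).2. Qed.
Lemma nottailS d : fwd d -> vert d <> vS T.
Proof. exact: (sink_S bip (vS T)).2. Qed.

Lemma dp_struct (p : seq D) (u v : Vx T) : dpath p u v -> exists x q, [/\ p = x :: q, vert x = u, all fwd p,
  path (fun a b => vert (alpha a) == vert b) x q & vert (alpha (last x q)) = v].
Proof. by case: p => // x q [? ? ? ?]; exists x, q. Qed.

Lemma dp_fwd (p : seq D) (u v : Vx T) (d : D) : dpath p u v -> d \in p -> fwd d.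
Proof. by case/dp_struct=> x [q [-> _ /allP H _ _]]; apply: H. Qed.

Lemma dp_step (p : seq D) (u v : Vx T) (d0 : D) i : dpath p u v -> i.+1 < size p ->
  vert (nth d0 p i.+1) = vert (alpha (nth d0 p i)).
Proof.
case/dp_struct=> x [q [-> _ _ /(pathP d0) H _]] /= iq.
by have := H i iq => /eqP ->.
Qed.

Lemma dp_conn (p : seq D) (u v : Vx T) (d0 : D) i j : dpath p u v -> i < j -> j < size p ->
  connect arc (vert (alpha (nth d0 p i))) (vert (nth d0 p j)).
Proof.
move=> dp; elim: j => // j IH; rewrite ltnS leq_eqVlt => /orP [/eqP <-|ij] js.
  by rewrite (dp_step d0 dp js) connect0.
apply: connect_trans (IH ij (ltnW js)) _; apply: connect1.
apply/existsP; exists (nth d0 p j); rewrite (dp_step d0 dp js) !eqxx !andbT.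
by apply: (dp_fwd dp); rewrite mem_nth // ltnW.
Qed.

Lemma dp_tinj (p : seq D) (u v : Vx T) (d d' : D) : dpath p u v -> d \in p -> d' \in p -> vert d = vert d' -> d = d'.
Proof.
move=> dp dI dI' E.
have Hd := nth_index d dI; have Hd' := nth_index d dI'.
have si := dI; rewrite -index_mem in si; have sj := dI'; rewrite -index_mem in sj.
case: (ltngtP (index d p) (index d' p)) => ij.
- have := dp_conn d dp ij sj; rewrite Hd Hd' -E => C.
  by move: (acyclic bip (dp_fwd dp dI)); rewrite C.
- have := dp_conn d dp ij si; rewrite Hd Hd' E => C.
  by move: (acyclic bip (dp_fwd dp dI')); rewrite C.
- by rewrite -Hd -Hd' ij.
Qed.

Lemma dp_hinj (p : seq D) (u v : Vx T) (d d' : D) : dpath p u v -> d \in p -> d' \in p ->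
  vert (alpha d) = vert (alpha d') -> d = d'.
Proof.
move=> dp dI dI' E.
have Hd := nth_index d dI; have Hd' := nth_index d dI'.
have si := dI; rewrite -index_mem in si; have sj := dI'; rewrite -index_mem in sj.
case: (ltngtP (index d p) (index d' p)) => ij.
- have := dp_conn d dp ij sj; rewrite Hd Hd' E => C.
  by move: (acyclic bip (dp_fwd dp dI')); rewrite C.
- have := dp_conn d dp ij si; rewrite Hd Hd' -E => C.
  by move: (acyclic bip (dp_fwd dp dI)); rewrite C.
- by rewrite -Hd -Hd' ij.
Qed.

Lemma dp_pred (p : seq D) (u v : Vx T) (d : D) : dpath p u v -> d \in p -> vert d <> u ->
  exists2 d', d' \in p & vert (alpha d') = vert d.
Proof.
move=> dp dI nu; have Hd := nth_index d dI; have si := dI; rewrite -index_mem in si.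
move: Hd si; case E: (index d p) => [|j] Hd si.
  by case/dp_struct: dp nu Hd => x [q [-> vx _ _ _]] /= nu Hd; move: nu; rewrite -Hd.
exists (nth d p j); first by rewrite mem_nth // ltnW.
by rewrite -(dp_step d dp si) Hd.
Qed.

Lemma dp_succ (p : seq D) (u v : Vx T) (d : D) : dpath p u v -> d \in p -> vert (alpha d) <> v ->
  exists2 d', d' \in p & vert d' = vert (alpha d).
Proof.
move=> dp dI nv; have Hd := nth_index d dI; have si := dI; rewrite -index_mem in si.
case: (ltnP (index d p).+1 (size p)) => sj.
  by exists (nth d p (index d p).+1); [rewrite mem_nth|rewrite (dp_step d dp sj) Hd].
case/dp_struct: dp nv Hd si sj => x [q [E _ _ _ vl]] nv Hd si sj.
have : index d p = size q by apply/eqP; rewrite eqn_leq -ltnS -{1}[(size q).+1]/(size (x::q)) -E si -ltnS -{1}[(size q).+1]/(size (x::q)) -E sj.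
by move=> I; move: Hd; rewrite I E /= -last_nth => Hd; move: nv; rewrite -Hd.
Qed.

Lemma dp_first (p : seq D) (u v : Vx T) (d : D) : dpath p u v -> d \in p -> vert d = u -> ohead p = Some d.
Proof.
move=> dp dI vd; case/dp_struct: (dp) => x [q [E vx _ _ _]].
have xI : x \in p by rewrite E mem_head.
have := dp_tinj dp xI dI; rewrite vx vd => /(_ erefl) <-; by rewrite E.
Qed.

Lemma dp_last (p : seq D) (u v : Vx T) (d : D) : dpath p u v -> d \in p -> vert (alpha d) = v -> ohead (rev p) = Some d.
Proof.
move=> dp dI vd; case/dp_struct: (dp) => x [q [E _ _ _ vl]].
have xI : last x q \in p by rewrite E mem_last.
have := dp_hinj dp xI dI; rewrite vl vd => /(_ erefl) <-; by rewrite E lastI rev_rcons.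
Qed.


Lemma dWE : dpath (WE T) (vN T) (vS T). Proof. exact: (t_WE tmp). Qed.
Lemma dEW : dpath (EW T) (vN T) (vS T). Proof. exact: (t_EW tmp). Qed.

Lemma vert_conn x y : vert x = vert y -> fconnect sigma x y.
Proof. exact: (vert_orbit sph x y).1. Qed.
Lemma conn_vert x y : fconnect sigma x y -> vert x = vert y.
Proof. exact: (vert_orbit sph x y).2. Qed.

Lemma rotv x y : x != y -> vert x = vert y ->
  (forall z, vert z = vert x -> merE (edg z) -> z = x \/ z = y) ->
  connect fadj (fac y) (fac (alpha x)).
Proof.
move=> xy vxy H; apply: rot => //; first exact: vert_conn.
by move=> z /conn_vert E; apply: H.
Qed.

Lemma prop_list (p : seq D) (u v : Vx T) (d0 : D) (R : D -> D -> Prop) :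
  dpath p u v -> (forall x, R x x) -> (forall x y z, R x y -> R y z -> R x z) ->
  (forall x x', x \in p -> x' \in p -> vert x' = vert (alpha x) -> R x x') ->
  forall d, d \in p -> R (nth d0 p 0) d.
Proof.
move=> dp Rr Rt Rs d dI; rewrite -(nth_index d0 dI); have := dI; rewrite -index_mem.
elim: (index d p) => // j IH js.
apply: Rt (IH (ltnW js)) _; apply: Rs; rewrite ?mem_nth // ?(ltnW js) //.
exact: (dp_step d0 dp js).
Qed.

Section Ends.
Variables d1 dk e1 em : D.
Hypothesis Hd1 : ohead (WE T) = Some d1.
Hypothesis Hdk : ohead (rev (WE T)) = Some dk.
Hypothesis He1 : ohead (EW T) = Some e1.
Hypothesis Hem : ohead (rev (EW T)) = Some em.

Lemma d1I : d1 \in WE T. Proof. by case: (WE T) Hd1 => //= x q [<-]; rewrite mem_head. Qed.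
Lemma e1I : e1 \in EW T. Proof. by case: (EW T) He1 => //= x q [<-]; rewrite mem_head. Qed.
Lemma dkI : dk \in WE T.
Proof. by move: Hdk; case/lastP: (WE T) => //= q x; rewrite rev_rcons /= => [[<-]]; rewrite mem_rcons mem_head. Qed.
Lemma emI : em \in EW T.
Proof. by move: Hem; case/lastP: (EW T) => //= q x; rewrite rev_rcons /= => [[<-]]; rewrite mem_rcons mem_head. Qed.
Lemma vd1 : vert d1 = vN T.
Proof. by case/dp_struct: dWE Hd1 => x [q [-> vx _ _ _]] [<-]. Qed.
Lemma ve1 : vert e1 = vN T.
Proof. by case/dp_struct: dEW He1 => x [q [-> vx _ _ _]] [<-]. Qed.
Lemma vdk : vert (alpha dk) = vS T.
Proof. by case/dp_struct: dWE Hdk => x [q [-> _ _ _ vl]]; rewrite lastI rev_rcons => [[<-]]. Qed.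
Lemma vem : vert (alpha em) = vS T.
Proof. by case/dp_struct: dEW Hem => x [q [-> _ _ _ vl]]; rewrite lastI rev_rcons => [[<-]]. Qed.
Lemma fd1 : fwd d1. Proof. exact: (dp_fwd dWE d1I). Qed.
Lemma fe1 : fwd e1. Proof. exact: (dp_fwd dEW e1I). Qed.
Lemma fdk : fwd dk. Proof. exact: (dp_fwd dWE dkI). Qed.
Lemma fem : fwd em. Proof. exact: (dp_fwd dEW emI). Qed.

Lemma merN z : vert z = vN T -> merE (edg z) -> z = d1 \/ z = e1.
Proof.
move=> vz /merE_dart [/orP [zI|zI]|/orP [zI|zI]].
- by left; have := dp_first dWE zI vz; rewrite Hd1 => [[]].
- by right; have := dp_first dEW zI vz; rewrite He1 => [[]].
- by have := notheadN (dp_fwd dWE zI); rewrite aK vz.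
- by have := notheadN (dp_fwd dEW zI); rewrite aK vz.
Qed.

Lemma merS z : vert z = vS T -> merE (edg z) -> z = alpha dk \/ z = alpha em.
Proof.
move=> vz /merE_dart [/orP [zI|zI]|/orP [zI|zI]].
- by have := nottailS (dp_fwd dWE zI).
- by have := nottailS (dp_fwd dEW zI).
- left; have := dp_last dWE zI; rewrite aK vz Hdk => /(_ erefl) [->]; by rewrite aK.
- right; have := dp_last dEW zI; rewrite aK vz Hem => /(_ erefl) [->]; by rewrite aK.
Qed.

Lemma merWE x x' z : x \in WE T -> x' \in WE T -> vert x' = vert (alpha x) ->
  vert z = vert x' -> merE (edg z) -> z = x' \/ z = alpha x.
Proof.
move=> xI xI' vx vz /merE_dart [/orP [zI|zI]|/orP [zI|zI]].
- by left; apply: (dp_tinj dWE zI xI').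
- have : vert z <> vN T by rewrite vz vx; apply: notheadN (dp_fwd dWE xI).
  case/(dp_pred dEW zI) => z' z'I vz'.
  have := t_disj_v tmp xI z'I; rewrite vz' vz vx => /(_ erefl) vS'.
  by have := nottailS (dp_fwd dWE xI'); rewrite vx.
- right; have := dp_hinj dWE zI xI; rewrite aK vz vx => /(_ erefl) <-; by rewrite aK.
- have := t_disj_v tmp xI zI; rewrite aK vz vx => /(_ erefl) vS'.
  by have := nottailS (dp_fwd dWE xI'); rewrite vx.
Qed.

Lemma merEW x x' z : x \in EW T -> x' \in EW T -> vert x' = vert (alpha x) ->
  vert z = vert x' -> merE (edg z) -> z = x' \/ z = alpha x.
Proof.
move=> xI xI' vx vz /merE_dart [/orP [zI|zI]|/orP [zI|zI]].
- have : vert z <> vN T by rewrite vz vx; apply: notheadN (dp_fwd dEW xI).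
  case/(dp_pred dWE zI) => z' z'I vz'.
  have := t_disj_v tmp z'I xI; rewrite vz' vz vx => /(_ erefl) vS'.
  by have := nottailS (dp_fwd dEW xI'); rewrite vx -vS'.
- by left; apply: (dp_tinj dEW zI xI').
- have := t_disj_v tmp zI xI; rewrite aK vz vx => /(_ erefl) vS'.
  by have := nottailS (dp_fwd dEW xI'); rewrite vx -vS'.
- right; have := dp_hinj dEW zI xI; rewrite aK vz vx => /(_ erefl) <-; by rewrite aK.
Qed.

Lemma d1e1 : d1 != e1.
Proof. by apply/eqP => E; apply: (t_disj_e tmp d1I e1I); rewrite E. Qed.
Lemma dkem : alpha dk != alpha em.
Proof. by apply/eqP => E; apply: (t_disj_e tmp dkI emI); rewrite -(aK dk) E aK. Qed.

Lemma RN1 : connect fadj (fac d1) (fac (alpha e1)).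
Proof.
apply: rotv; first by rewrite eq_sym d1e1.
  by rewrite vd1 ve1.
by move=> z vz m; rewrite ve1 in vz; case: (merN vz m); [right|left].
Qed.
Lemma RN2 : connect fadj (fac e1) (fac (alpha d1)).
Proof.
apply: rotv; first by rewrite d1e1.
  by rewrite vd1 ve1.
by move=> z vz m; rewrite vd1 in vz; case: (merN vz m); [left|right].
Qed.
Lemma RS1 : connect fadj (fac (alpha dk)) (fac em).
Proof.
rewrite -(aK em); apply: rotv; first by rewrite eq_sym dkem.
  by rewrite vdk vem.
by move=> z vz m; rewrite vem in vz; case: (merS vz m); [right|left].
Qed.
Lemma RS2 : connect fadj (fac (alpha em)) (fac dk).
Proof.
rewrite -(aK dk); apply: rotv; first by rewrite dkem.
  by rewrite vdk vem.
by move=> z vz m; rewrite vdk in vz; case: (merS vz m); [left|right].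
Qed.

Definition Rf (x y : D) := connect fadj (fac x) (fac y) /\ connect fadj (fac (alpha x)) (fac (alpha y)).

Lemma Rf_refl x : Rf x x. Proof. by split; apply: connect0. Qed.
Lemma Rf_trans x y z : Rf x y -> Rf y z -> Rf x z.
Proof. by move=> [a b] [c d]; split; [apply: connect_trans a c|apply: connect_trans b d]. Qed.

Lemma Rf_step_WE x x' : x \in WE T -> x' \in WE T -> vert x' = vert (alpha x) -> Rf x x'.
Proof.
move=> xI xI' vx; have nx : alpha x != x'.
  by apply/eqP => E; move: (dp_fwd dWE xI'); rewrite -E fwdA (dp_fwd dWE xI).
split.
  apply: conn_sym; rewrite -(aK x); apply: rotv; first exact: nx.
    by rewrite vx.
  by move=> z vz m; case: (merWE xI xI' vx _ m); [rewrite vz|right|left].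
apply: rotv; first by rewrite eq_sym.
  by rewrite vx.
by move=> z vz m; case: (merWE xI xI' vx vz m); [left|right].
Qed.

Lemma Rf_step_EW x x' : x \in EW T -> x' \in EW T -> vert x' = vert (alpha x) -> Rf x x'.
Proof.
move=> xI xI' vx; have nx : alpha x != x'.
  by apply/eqP => E; move: (dp_fwd dEW xI'); rewrite -E fwdA (dp_fwd dEW xI).
split.
  apply: conn_sym; rewrite -(aK x); apply: rotv; first exact: nx.
    by rewrite vx.
  by move=> z vz m; case: (merEW xI xI' vx _ m); [rewrite vz|right|left].
apply: rotv; first by rewrite eq_sym.
  by rewrite vx.
by move=> z vz m; case: (merEW xI xI' vx vz m); [left|right].
Qed.

Lemma WEprop d : d \in WE T -> Rf d1 d.
Proof.
move=> dI; have := prop_list d1 dWE Rf_refl Rf_trans Rf_step_WE dI.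
by case: (WE T) Hd1 => //= x q [->].
Qed.
Lemma EWprop d : d \in EW T -> Rf e1 d.
Proof.
move=> dI; have := prop_list e1 dEW Rf_refl Rf_trans Rf_step_EW dI.
by case: (EW T) He1 => //= x q [->].
Qed.


Lemma inWf_conn f g : inWf f -> connect fadj f g -> inWf g.
Proof.
case/existsP=> d /andP [dI c] c'; apply/existsP; exists d; rewrite dI.
exact: connect_trans c c'.
Qed.
Lemma inEf_conn f g : inEf f -> connect fadj f g -> inEf g.
Proof.
case/existsP=> d /andP [dI c] c'; apply/existsP; exists d; rewrite dI.
exact: connect_trans c c'.
Qed.

Lemma inWf_e1 : inWf (fac (alpha e1)).
Proof. by apply/existsP; exists d1; rewrite d1I RN1. Qed.
Lemma inEf_e1 : inEf (fac e1).
Proof. by apply/existsP; exists d1; rewrite d1I conn_sym // RN2. Qed.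

Lemma good_alpha a : inWf (fac a) || inEf (fac a) -> inWf (fac (alpha a)) || inEf (fac (alpha a)).
Proof.
case: (boolP (merE (edg a))) => [m|nm] G.
  case: (merE_dart m) => [/orP [aI|aI]|/orP [aI|aI]].
  - by apply/orP; right; apply/existsP; exists a; rewrite aI connect0.
  - by apply/orP; left; apply: inWf_conn inWf_e1 (EWprop aI).2.
  - by apply/orP; left; apply/existsP; exists (alpha a); rewrite aI connect0.
  - by apply/orP; right; apply: inEf_conn inEf_e1 (EWprop aI).1.
have c : connect fadj (fac a) (fac (alpha a)).
  by apply: connect1; apply/existsP; exists a; rewrite !eqxx nm.
case/orP: G => G; apply/orP; [left; exact: inWf_conn G c|right; exact: inEf_conn G c].
Qed.

Lemma all_good f : inWf f || inEf f.
Proof.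
case: (fac_surj sph f) => x <-.
case/connectP: (map_connected sph d1 x) => p pp ->.
have : inWf (fac d1) || inEf (fac d1).
  by apply/orP; left; apply/existsP; exists d1; rewrite d1I connect0.
elim: p d1 pp => //= y p IH z /andP [/orP [/eqP ->|/eqP ->] pp] G; apply: IH pp _.
  exact: good_alpha.
by rewrite fac_sigma; apply: good_alpha.
Qed.

Lemma cell_good (c : cell T) : c != CO T -> closW c || closE c.
Proof.
case: c => [[v|e]|[f|[]]] //= _.
- case: (boolP (merV v)) => //= nm; rewrite /inWv /inEv nm /=; case: (vert_surj sph v) => d vd.
  case/orP: (all_good (fac d)) => G; apply/orP; [left|right];
    apply/existsP; exists d; by rewrite vd eqxx G.
- case: (boolP (merE e)) => //= nm; rewrite /inWe /inEe nm /=; case: (edg_surj sph e) => d vd.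
  case/orP: (all_good (fac d)) => G; apply/orP; [left|right];
    apply/existsP; exists d; by rewrite vd eqxx G.
- exact: all_good.
Qed.

End Ends.
End Geo.

Module LinPart.
Import GRing.Theory.
Local Open Scope ring_scope.

Notation F2 := 'F_2.

Lemma F2add (x : F2) : x + x = 0.
Proof. exact: (addrr_pchar2 (pchar_Fp (isT : prime 2))). Qed.
Lemma F2eq (x y : F2) : x + y = 0 -> y = x.
Proof. by move=> h; rewrite -[y]add0r -(F2add x) -addrA h addr0. Qed.

Lemma F2cancel (a b c : F2) : a + b + (b + c) = a + c.
Proof. by rewrite addrA -(addrA a b b) F2add addr0. Qed.

Lemma sum_ord (X : finType) (G : 'I_#|X| -> F2) :
  \sum_(i < #|X|) G i = \sum_(x : X) G (enum_rank x).
Proof. by rewrite (reindex enum_rank) //; apply: onW_bij; apply: enum_rank_bij. Qed.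

Lemma sum_ind (X : finType) (x0 : X) (G : X -> F2) :
  \sum_(x : X) (x0 == x)%:R * G x = G x0.
Proof.
rewrite (bigD1 x0) //= eqxx mul1r big1 ?addr0 // => x /negbTE; rewrite eq_sym => ->.
by rewrite mul0r.
Qed.

Section Lin.
Variable T : tdata.
Hypothesis tmp : template T.
Local Notation D := (Dart T).
Local Notation alpha := (@alpha T).
Local Notation sigma := (@sigma T).
Local Notation vert := (@vert T).
Local Notation edg := (@edg T).
Local Notation fac := (@fac T).
Local Notation fwd := (@fwd T).
Local Notation fadj := (@fadj T).
Local Notation merE := (@merE T).
Local Notation merD := (@merD T).

Lemma sum_edge (G : D -> F2) x : \sum_(d | edg d == edg x) G d = G x + G (alpha x).
Proof.
rewrite (bigD1 x) //= (bigD1 (alpha x)) /=; last first.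
  by rewrite edg_alpha // eqxx /=; apply/eqP; exact: (alpha_fix (sph tmp)).
rewrite big1 ?addr0 // => d /andP [/andP [/eqP E dx] dax].
by case: (edg_eq tmp E) => Ed; [move: dx|move: dax]; rewrite Ed eqxx.
Qed.

Lemma const_darts (X : Type) (g : D -> X) d0 :
  (forall d, g (alpha d) = g d) -> (forall d, g (sigma d) = g d) -> forall d, g d = g d0.
Proof.
move=> ga gs d; case/connectP: (map_connected (sph tmp) d0 d) => p pp ->.
elim: p d0 pp => //= y p IH z /andP [/orP [/eqP ->|/eqP ->] pp]; by rewrite IH // ?ga ?gs.
Qed.

Definition inc1 (e : Eg T) (v : Vx T) : F2 := \sum_(d | edg d == e) (vert d == v)%:R.
Definition inc2 (f : Fc T) (e : Eg T) : F2 := \sum_(d | fac d == f) (edg d == e)%:R.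
Definition A1 : 'M[F2]_(#|Eg T|, #|Vx T|) := \matrix_(i, j) inc1 (enum_val i) (enum_val j).
Definition A2 : 'M[F2]_(#|Fc T|, #|Eg T|) := \matrix_(i, j) inc2 (enum_val i) (enum_val j).

Lemma phi_inj : injective (@phi T).
Proof. by move=> x y; rewrite /phi => /(sigma_inj (sph tmp)) /(can_inj (aK tmp)). Qed.

Lemma sum_indf (X : finType) (s : seq D) (p : D -> X) (P : pred D) (H : X -> F2) :
  \sum_(x : X) (\sum_(d <- s | P d) (p d == x)%:R) * H x = \sum_(d <- s | P d) H (p d).
Proof.
under eq_bigr => x _ do rewrite big_distrl /=.
rewrite exchange_big /=; apply: eq_bigr => d _; exact: sum_ind.
Qed.

Lemma A21 : A2 *m A1 = 0.
Proof.
apply/matrixP => i j; rewrite !mxE sum_ord.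
set f := enum_val i; set v := enum_val j.
under eq_bigr => e _ do rewrite !mxE enum_rankK.
rewrite /inc2 sum_indf.
under eq_bigr => d _ do rewrite /inc1 sum_edge.
rewrite big_split /=.
have -> : \sum_(d | fac d == f) ((vert (alpha d) == v)%:R : F2) = \sum_(d | fac d == f) (vert d == v)%:R.
  rewrite [RHS](reindex_inj phi_inj) /=; apply: eq_big => d.
    by rewrite /phi fac_sigma // aK.
  by move=> _; rewrite /phi vert_sigma.
exact: F2add.
Qed.


Lemma inc2E f e : inc2 f e = \sum_(d | edg d == e) (fac d == f)%:R.
Proof.
rewrite /inc2 big_mkcond [RHS]big_mkcond; apply: eq_bigr => d _.
by case: (fac d == f); case: (edg d == e).
Qed.


Lemma kerA1T : (\rank (kermx A1^T) <= 1)%N.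
Proof.
have sub : (kermx A1^T <= (const_mx 1 : 'rV[F2]_#|Vx T|))%MS.
  case: (vert_surj (sph tmp) (vN T)) => some_dart _.
  apply/row_subP => i; set u := row i (kermx A1^T).
  have hu : u *m A1^T = 0 by rewrite /u -row_mul mulmx_ker row0.
  clearbody u.
  pose g d := u 0 (enum_rank (vert d)).
  have ga : forall x, g (alpha x) = g x.
    move=> x; apply/F2eq; move/matrixP: hu => /(_ 0 (enum_rank (edg x))) h.
    rewrite !mxE sum_ord in h; rewrite -h; under eq_bigr => v _ do rewrite !mxE !enum_rankK mulrC.
    by rewrite /inc1 sum_indf sum_edge.
  have gs : forall x, g (sigma x) = g x by move=> x; rewrite /g vert_sigma.
  have cst : forall j, u 0 j = g some_dart.
    move=> j; case: (vert_surj (sph tmp) (enum_val j)) => d vd.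
    by rewrite -(@const_darts _ g some_dart ga gs d) /g vd enum_valK.
  have -> : u = g some_dart *: const_mx 1.
    by apply/matrixP => a j; rewrite !mxE (ord1 a) cst mulr1.
  exact: scalemx_sub (submx_refl _).
exact: leq_trans (mxrankS sub) (rank_leq_row _).
Qed.

Lemma kerA2 : (\rank (kermx A2) <= 1)%N.
Proof.
have sub : (kermx A2 <= (const_mx 1 : 'rV[F2]_#|Fc T|))%MS.
  case: (vert_surj (sph tmp) (vN T)) => some_dart _.
  apply/row_subP => i; set u := row i (kermx A2).
  have hu : u *m A2 = 0 by rewrite /u -row_mul mulmx_ker row0.
  clearbody u.
  pose g d := u 0 (enum_rank (fac d)).
  have ga : forall x, g (alpha x) = g x.
    move=> x; apply/F2eq; move/matrixP: hu => /(_ 0 (enum_rank (edg x))) h.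
    rewrite !mxE sum_ord in h; rewrite -h; under eq_bigr => v _ do rewrite !mxE !enum_rankK mulrC inc2E.
    by rewrite sum_indf sum_edge.
  have gs : forall x, g (sigma x) = g x by move=> x; rewrite /g fac_sigma // -/(g _) ga.
  have cst : forall j, u 0 j = g some_dart.
    move=> j; case: (fac_surj (sph tmp) (enum_val j)) => d vd.
    by rewrite -(@const_darts _ g some_dart ga gs d) /g vd enum_valK.
  have -> : u = g some_dart *: const_mx 1.
    by apply/matrixP => a j; rewrite !mxE (ord1 a) cst mulr1.
  exact: scalemx_sub (submx_refl _).
exact: leq_trans (mxrankS sub) (rank_leq_row _).
Qed.

Lemma tele x q v : path (fun a b => vert (alpha a) == vert b) x q ->
  \sum_(d <- x :: q) (((vert d == v)%:R : F2) + (vert (alpha d) == v)%:R) =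
  (vert x == v)%:R + (vert (alpha (last x q)) == v)%:R.
Proof.
elim: q x => [|y q IH] x /=; first by rewrite big_cons big_nil addr0.
move=> /andP [/eqP E pq]; rewrite big_cons IH // -E.
exact: F2cancel.
Qed.

Definition cc (e : Eg T) : F2 := \sum_(d <- WE T ++ EW T) (edg d == e)%:R.
Definition cvec : 'rV[F2]_#|Eg T| := \row_i cc (enum_val i).

Lemma tele_dp p : dpath p (vN T) (vS T) -> forall v,
  \sum_(d <- p) (((vert d == v)%:R : F2) + (vert (alpha d) == v)%:R) =
  (vN T == v)%:R + (vS T == v)%:R.
Proof. by case/dp_struct => x [q [-> vx _ pq vl]] v; rewrite tele // vx vl. Qed.

Lemma cA1 : cvec *m A1 = 0.
Proof.
apply/matrixP => i j; rewrite !mxE sum_ord.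
under eq_bigr => e _ do rewrite !mxE !enum_rankK.
rewrite /cc /inc1 sum_indf.
under eq_bigr => d _ do rewrite sum_edge.
rewrite big_cat /= (tele_dp (dWE tmp)) (tele_dp (dEW tmp)); exact: F2add.
Qed.

Lemma sep d1 : ohead (WE T) = Some d1 ->
  exists A : Fc T -> F2, (forall f g, fadj f g -> A f = A g) /\ A (fac d1) != A (fac (alpha d1)).
Proof.
move=> Hd1.
have cker : (cvec <= kermx A1)%MS by apply/sub_kermxP; exact: cA1.
have A2k : (A2 <= kermx A1)%MS by apply/sub_kermxP; exact: A21.
have r1 := kerA1T; rewrite mxrank_ker mxrank_tr in r1.
have r2 := kerA2; rewrite mxrank_ker in r2.
have eu := euler_sphere (sph tmp).
have l1 := rank_leq_col A1; have l2 := rank_leq_row A2.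
have sub : (kermx A1 <= A2)%MS.
  rewrite -(mxrank_leqif_sup A2k).2 eqn_leq (mxrankS A2k) /= mxrank_ker.
  move: r1 r2 l1 l2 eu; pose a : nat := \rank A1; pose b : nat := \rank A2; rewrite -/a -/b; clearbody a b; move: #|Vx T| #|Fc T| #|Eg T| => c e n; lia.
case/submxP: (submx_trans cker sub) => a ca.
pose A f := a 0 (enum_rank f).
have key : forall x, cc (edg x) = A (fac x) + A (fac (alpha x)).
  move=> x; move/matrixP: ca => /(_ 0 (enum_rank (edg x))).
  rewrite !mxE enum_rankK sum_ord => ->.
  under eq_bigr => f _ do rewrite !mxE !enum_rankK mulrC inc2E.
  by rewrite sum_indf sum_edge.
exists A; split.
  move=> f g /existsP [d /and3P [/eqP <- /eqP <- nm]].
  apply/esym/F2eq; rewrite -key /cc big_seq big1 // => d' d'I.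
  case: eqP => // E; case/negP: nm; rewrite -E; apply: merE_of.
  by rewrite /merD -mem_cat d'I.
case/dp_struct: (dWE tmp) (Hd1) => x [q [Eq vx _ _ _]]; rewrite Eq /= => [[Ex]]; subst x.
have c1 : cc (edg d1) = 1.
  rewrite /cc Eq cat_cons big_cons eqxx big_cat /= !big_seq !big1 ?addr0 //.
    by move=> d dI; case: eqP => // E; case: (t_disj_e tmp (d1I Hd1) dI); rewrite E.
  move=> d dI; case: eqP => // E.
  have dI' : d \in WE T by rewrite Eq inE dI orbT.
  have := fwd_edge tmp (fd1 tmp Hd1) (dp_fwd (dWE tmp) dI') E => Ed.
  have := dI; rewrite -index_mem => si; have := nth_index d dI.
  move=> nd; have := dp_step d (dWE tmp) (i:=index d q); rewrite Eq /= nd => /(_ si) vd.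
  have mI : nth d (d1 :: q) (index d q) \in WE T by rewrite Eq; apply: mem_nth; exact: ltnW.
  have := notheadN tmp (dp_fwd (dWE tmp) mI).
  by rewrite -vd Ed (vd1 tmp Hd1) => /(_ erefl).
apply/eqP => E; move: c1; rewrite key E F2add => /esym /eqP; by rewrite oner_eq0.
Qed.

End Lin.

End LinPart.
Import LinPart.

Section SeqL.
Variable A : eqType.

Lemma filter_mono (s : seq A) (X : pred A) a b : uniq s ->
  a \in filter X s -> b \in filter X s ->
  index a (filter X s) < index b (filter X s) -> index a s < index b s.
Proof.
elim: s => //= x s IH /andP [xs us].
case Xx: (X x) => /=.
- rewrite !inE; case: (eqVneq x a) => [<-|xa] /=.
    by case: (eqVneq x b) => [<-|xb] //=; rewrite ltnn.
  case: (eqVneq x b) => [<-|xb] //= aI bI; rewrite ltnS; exact: IH.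
- move=> aI bI; have xa : x != a by apply/eqP => E; move: aI; rewrite -E mem_filter Xx.
  have xb : x != b by apply/eqP => E; move: bI; rewrite -E mem_filter Xx.
  by rewrite (negbTE xa) (negbTE xb) ltnS; apply: IH.
Qed.

Lemma filter_head2 (s : seq A) (X : pred A) x0 : 1 < size s ->
  X (nth x0 s 0) -> X (nth x0 s 1) -> nth x0 (filter X s) 1 = nth x0 s 1.
Proof. by case: s => [|a [|b s]] //= _ -> ->. Qed.

Lemma filter_tail2 (s : seq A) (X : pred A) x0 : 1 < size s ->
  X (nth x0 s (size s - 1)) -> X (nth x0 s (size s - 2)) ->
  nth x0 (filter X s) (size (filter X s) - 2) = nth x0 s (size s - 2).
Proof.
case/lastP: s => // s b; case/lastP: s => // s a _.
have nthE (t : seq A) u v : nth x0 (rcons (rcons t u) v) (size (rcons (rcons t u) v) - 2) = u.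
  by rewrite !size_rcons nth_rcons size_rcons (_ : (size t).+2 - 2 = size t) ?nth_rcons ?ltnn ?eqxx ?ltnS ?leqnn //; lia.
have nthL (t : seq A) u v : nth x0 (rcons (rcons t u) v) (size (rcons (rcons t u) v) - 1) = v.
  by rewrite !size_rcons nth_rcons size_rcons (_ : (size t).+2 - 1 = (size t).+1) ?ltnn ?eqxx //; lia.
rewrite nthE nthL => Xb Xa; rewrite !filter_rcons Xa Xb; exact: nthE.
Qed.

End SeqL.


Section Ham.
Variable T : tdata.
Hypothesis tmp : template T.
Local Notation D := (Dart T).
Local Notation alpha := (@alpha T).
Local Notation vert := (@vert T).
Local Notation edg := (@edg T).
Local Notation fac := (@fac T).
Local Notation fwd := (@fwd T).
Local Notation CO := (CO T).

Lemma SI1 z (c : cell T) d : fwd d -> step z c (CE (edg d)) ->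
  c = CV (vert d) \/ c = CF (if z then fac (alpha d) else fac d).
Proof.
move=> fd; case: c => [[v|e]|[f|[]]] //=.
- by case=> d' [fd' vd' ed']; left; rewrite -vd' (fwd_edge tmp fd fd' ed').
- case: z.
    by case=> d' [fd' ed' fa _]; right; rewrite -fa (fwd_edge tmp fd fd' ed').
  by case=> d' [fd' ed' fa _]; right; rewrite -fa (fwd_edge tmp fd fd' ed').
Qed.

Lemma SI2 z (c : cell T) d : fwd d -> step z (CE (edg d)) c ->
  c = CV (vert (alpha d)) \/ c = CF (if z then fac d else fac (alpha d)).
Proof.
move=> fd; case: c => [[v|e]|[f|[]]] //=.
- by case=> d' [fd' ed' vd']; left; rewrite -vd' (fwd_edge tmp fd fd' ed').
- case: z.
    by case=> d' [fd' ed' fa _]; right; rewrite -fa (fwd_edge tmp fd fd' ed').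
  by case=> d' [fd' ed' fa _]; right; rewrite -fa (fwd_edge tmp fd fd' ed').
Qed.

Lemma hp_head X z t : ham_path X z t -> nth CO t 0 = CV (vN T).
Proof. by case=> _ _; case: t => //= x t [->]. Qed.

Lemma hp_last X z t : ham_path X z t -> nth CO t (size t - 1) = CV (vS T) /\ 0 < size t.
Proof.
case=> _ _ _; case/lastP: t => // t x; rewrite rev_rcons /= => [[->]] _.
by rewrite size_rcons nth_rcons subn1 /= ltnn eqxx.
Qed.

Lemma hp_pred X z t c : ham_path X z t -> c \in t -> 0 < index c t ->
  step z (nth CO t (index c t).-1) c /\ X (nth CO t (index c t).-1).
Proof.
case=> ut mt _ _ st cI; have si := cI; rewrite -index_mem in si.
case E: (index c t) => [|j] //= _; rewrite E in si.
have := st j si; rewrite -E nth_index // => S; split => //.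
by rewrite -mt mem_nth // ltnW.
Qed.

Lemma hp_succ X z t c : ham_path X z t -> c \in t -> (index c t).+1 < size t ->
  step z c (nth CO t (index c t).+1) /\ X (nth CO t (index c t).+1).
Proof.
case=> ut mt _ _ st cI si.
have := st _ si; rewrite nth_index // => S; split => //.
by rewrite -mt mem_nth.
Qed.

Lemma hp_first X z t d : ham_path X z t -> X (CE (edg d)) -> fwd d -> vert d = vN T ->
  ~~ X (CF (if z then fac (alpha d) else fac d)) -> nth CO t 1 = CE (edg d).
Proof.
move=> hp Xc fd vd nX; have [ut mt _ _ _] := hp.
have cI : CE (edg d) \in t by rewrite mt.
have si := cI; rewrite -index_mem in si.
have i0 : 0 < index (CE (edg d)) t.
  case E: (index (CE (edg d)) t) => //; have := nth_index CO cI; rewrite E (hp_head hp) => H; discriminate H.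
have [S Xp] := hp_pred hp cI i0.
case: (SI1 fd S) => Ep; last by move: Xp; rewrite Ep (negbTE nX).
have p1 : (index (CE (edg d)) t).-1 < size t by rewrite (leq_ltn_trans (leq_pred _) si).
have p0 : 0 < size t by rewrite (leq_ltn_trans _ si).
move: Ep; rewrite vd -(hp_head hp) => /eqP; rewrite nth_uniq //.
by move=> /eqP j0; rewrite -(nth_index CO cI); congr nth; rewrite -(prednK i0) j0.
Qed.

Lemma hp_notfirst X z t d : ham_path X z t -> X (CE (edg d)) -> fwd d -> vert d = vN T ->
  nth CO t 1 != CE (edg d) ->
  index (CF (if z then fac (alpha d) else fac d)) t < index (CE (edg d)) t.
Proof.
move=> hp Xc fd vd nf; have [ut mt _ _ _] := hp.
have cI : CE (edg d) \in t by rewrite mt.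
have si := cI; rewrite -index_mem in si.
have i0 : 0 < index (CE (edg d)) t.
  case E: (index (CE (edg d)) t) => //; have := nth_index CO cI; rewrite E (hp_head hp) => H; discriminate H.
have [S Xp] := hp_pred hp cI i0.
case: (SI1 fd S) => Ep.
  have p1 : (index (CE (edg d)) t).-1 < size t by rewrite (leq_ltn_trans (leq_pred _) si).
  have p0 : 0 < size t by rewrite (leq_ltn_trans _ si).
  move: Ep; rewrite vd -(hp_head hp) => /eqP; rewrite nth_uniq //.
  move=> /eqP j0; case/negP: nf; apply/eqP.
  by rewrite -(nth_index CO cI); congr nth; rewrite -(prednK i0) j0.
rewrite -Ep index_uniq; first by rewrite prednK.
  by rewrite (leq_ltn_trans _ si) // leq_pred.
by [].
Qed.

Lemma hp_lastE X z t d : ham_path X z t -> X (CE (edg d)) -> fwd d -> vert (alpha d) = vS T ->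
  ~~ X (CF (if z then fac d else fac (alpha d))) -> nth CO t (size t - 2) = CE (edg d).
Proof.
move=> hp Xc fd vd nX; have [ut mt _ _ _] := hp.
have cI : CE (edg d) \in t by rewrite mt.
have si := cI; rewrite -index_mem in si.
have [hl s0] := hp_last hp.
have sj : (index (CE (edg d)) t).+1 < size t.
  rewrite ltn_neqAle si andbT; apply/eqP => E.
  by move: hl; rewrite -E subn1 /= nth_index.
have [S Xp] := hp_succ hp cI sj.
case: (SI2 fd S) => Ep; last by move: Xp; rewrite Ep (negbTE nX).
move: Ep; rewrite vd -hl => /eqP; rewrite nth_uniq //; last by rewrite subn1 prednK // leqnn.
move=> /eqP j0; rewrite -(nth_index CO cI); congr nth; lia.
Qed.

Lemma hp_notlast X z t d : ham_path X z t -> X (CE (edg d)) -> fwd d -> vert (alpha d) = vS T ->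
  nth CO t (size t - 2) != CE (edg d) ->
  index (CE (edg d)) t < index (CF (if z then fac d else fac (alpha d))) t.
Proof.
move=> hp Xc fd vd nf; have [ut mt _ _ _] := hp.
have cI : CE (edg d) \in t by rewrite mt.
have si := cI; rewrite -index_mem in si.
have [hl s0] := hp_last hp.
have sj : (index (CE (edg d)) t).+1 < size t.
  rewrite ltn_neqAle si andbT; apply/eqP => E.
  by move: hl; rewrite -E subn1 /= nth_index.
have [S Xp] := hp_succ hp cI sj.
case: (SI2 fd S) => Ep.
  move: Ep; rewrite vd -hl => /eqP; rewrite nth_uniq //; last by rewrite subn1 prednK // leqnn.
  move=> /eqP j0; case/negP: nf; apply/eqP.
  rewrite -(nth_index CO cI); congr nth; lia.
by rewrite -Ep index_uniq.
Qed.

End Ham.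

Section SeqM.
Variable A : eqType.

Lemma infix3 (s : seq A) a b c : uniq s -> infix [:: a; b; c] s ->
  index b s = (index a s).+1 /\ index c s = (index b s).+1.
Proof.
move=> us /infixP [p [p' E]].
have U : uniq (p ++ [:: a, b, c & p']) by rewrite -E.
rewrite cat_uniq in U; case/and3P: U => _ /hasPn H u2.
have ap : a \notin p by apply: H; rewrite inE eqxx.
have bp : b \notin p by apply: H; rewrite !inE eqxx orbT.
have cp : c \notin p by apply: H; rewrite !inE eqxx !orbT.
move: u2 => /= /andP [na /andP [nb _]].
move: na; rewrite !inE negb_or => /andP [nab /norP [nac _]].
move: nb; rewrite !inE negb_or => /andP [nbc _].
rewrite E !index_cat (negbTE ap) (negbTE bp) (negbTE cp) /= eqxx.
rewrite (negbTE nab) (negbTE nac) (negbTE nbc) eqxx.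
by rewrite !inE !eqxx !orbT /=; split; lia.
Qed.


Lemma fhead (s : seq A) (X : pred A) x0 : 0 < size s -> X (nth x0 s 0) ->
  nth x0 (filter X s) 0 = nth x0 s 0.
Proof. by case: s => //= a s _ ->. Qed.

Lemma flast (s : seq A) (X : pred A) x0 : 0 < size s -> X (nth x0 s (size s - 1)) ->
  nth x0 (filter X s) (size (filter X s) - 1) = nth x0 s (size s - 1).
Proof.
case/lastP: s => // s a _; rewrite size_rcons subn1 /= nth_rcons ltnn eqxx => Xa.
by rewrite filter_rcons Xa size_rcons subn1 /= nth_rcons ltnn eqxx.
Qed.

End SeqM.

Section Main.
Variable T : tdata.
Hypothesis tmp : template T.
Local Notation D := (Dart T).
Local Notation alpha := (@alpha T).
Local Notation vert := (@vert T).
Local Notation edg := (@edg T).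
Local Notation fac := (@fac T).
Local Notation fwd := (@fwd T).
Local Notation fadj := (@fadj T).
Local Notation inWf := (@inWf T).
Local Notation inEf := (@inEf T).
Local Notation CO := (CO T).
Local Notation closW := (@closW T).
Local Notation closE := (@closE T).
Variables d1 dk e1 em : D.
Hypothesis Hd1 : ohead (WE T) = Some d1.
Hypothesis Hdk : ohead (rev (WE T)) = Some dk.
Hypothesis He1 : ohead (EW T) = Some e1.
Hypothesis Hem : ohead (rev (EW T)) = Some em.

Lemma faceSep :
  [/\ ~~ inWf (fac (alpha d1)), ~~ inWf (fac e1), ~~ inWf (fac (alpha dk)) & ~~ inWf (fac em)] /\
  [/\ ~~ inEf (fac d1), ~~ inEf (fac (alpha e1)), ~~ inEf (fac dk) & ~~ inEf (fac (alpha em))].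
Proof.
case: (sep tmp Hd1) => A [Ai An].
have cA : forall f g, connect fadj f g -> A f = A g.
  move=> f g /connectP [p pp ->]; elim: p f pp => //= y p IH f /andP [fy pp].
  by rewrite (Ai _ _ fy); apply: IH.
have nW : forall g, A g = A (fac (alpha d1)) -> ~~ inWf g.
  move=> g Ag; apply/negP; case/existsP => d /andP [dI c].
  have E2 := cA _ _ (WEprop tmp Hd1 dI).1; have E1 := cA _ _ c.
  by move/eqP: An; rewrite E2 E1 Ag.
have nE : forall g, A g = A (fac d1) -> ~~ inEf g.
  move=> g Ag; apply/negP; case/existsP => d /andP [dI c].
  have E2 := cA _ _ (WEprop tmp Hd1 dI).2; have E1 := cA _ _ c.
  by move/eqP: An; rewrite E2 E1 Ag.
have v2 : A (fac (alpha dk)) = A (fac (alpha d1)) := esym (cA _ _ (WEprop tmp Hd1 (dkI Hdk)).2).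
have v5 : A (fac dk) = A (fac d1) := esym (cA _ _ (WEprop tmp Hd1 (dkI Hdk)).1).
split; split.
- exact: nW.
- apply: nW; exact: (cA _ _ (RN2 tmp Hd1 He1)).
- exact: nW.
- apply: nW; by rewrite -(cA _ _ (RS1 tmp Hdk Hem)).
- exact: nE.
- apply: nE; exact: esym (cA _ _ (RN1 tmp Hd1 He1)).
- exact: nE.
- apply: nE; by rewrite (cA _ _ (RS2 tmp Hdk Hem)).
Qed.

Lemma closNS : [/\ closW (CV (vN T)), closE (CV (vN T)), closW (CV (vS T)) & closE (CV (vS T))].
Proof.
have mN : merV (vN T).
  by apply/existsP; exists d1; rewrite /merD (d1I Hd1) (vd1 tmp Hd1) eqxx.
have mS : merV (vS T).
  by apply/existsP; exists dk; rewrite /merD (dkI Hdk) (vdk tmp Hdk) eqxx orbT.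
by rewrite /= mN mS.
Qed.

Lemma hends (h : seq (cell T)) X Y zx zy f g : uniq h ->
  ham_path X zx (filter X h) -> ham_path Y zy (filter Y h) ->
  (forall c, c != CO -> X c || Y c) -> infix [:: CF f; CO; CF g] h ->
  [/\ nth CO h 0 = CV (vN T), nth CO h (size h - 1) = CV (vS T), 0 < index (CF f) h,
      (index (CF g) h).+1 < size h &
      index CO h = (index (CF f) h).+1 /\ index (CF g) h = (index CO h).+1].
Proof.
move=> uh hX hY cov inf; have [i1 i2] := infix3 uh inf.
have gI : CF g \in h by move/infixP: inf => [p [p' ->]]; rewrite !mem_cat !inE eqxx !orbT.
have sg := gI; rewrite -index_mem in sg.
have s0 : 0 < size h by apply: leq_ltn_trans sg.
have h0O : nth CO h 0 != CO.
  apply/eqP => E; have := index_uniq CO s0 uh; rewrite E i1 //.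
have N0 : nth CO h 0 = CV (vN T).
  case/orP: (cov _ h0O) => Xc.
    by rewrite -(fhead s0 Xc); apply: (hp_head hX).
  by rewrite -(fhead s0 Xc); apply: (hp_head hY).
have f0 : 0 < index (CF f) h.
  case E: (index (CF f) h) => //.
  have fI : CF f \in h by rewrite -index_mem E.
  by have := nth_index CO fI; rewrite E N0.
have s1 : size h - 1 < size h by rewrite subn1 prednK // leqnn.
have hlO : nth CO h (size h - 1) != CO.
  apply/eqP => E; have := index_uniq CO s1 uh; rewrite E => I.
  by move: sg; rewrite i2 I subn1 prednK // ltnn.
have S0 : nth CO h (size h - 1) = CV (vS T).
  case/orP: (cov _ hlO) => Xc.
    by rewrite -(flast s0 Xc); apply: (hp_last hX).1.
  by rewrite -(flast s0 Xc); apply: (hp_last hY).1.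
split => //.
rewrite ltn_neqAle sg andbT; apply/eqP => E.
have : nth CO h (index (CF g) h) = nth CO h (size h - 1) by rewrite -E subn1.
by rewrite nth_index // S0.
Qed.

Lemma hsecond (h : seq (cell T)) (c : cell T) : 1 < size h -> nth CO h 0 = CV (vN T) -> nth CO h 1 != CO ->
  nth CO (filter closW h) 1 = c -> nth CO (filter closE h) 1 = c -> nth CO h 1 = c.
Proof.
move=> s1 N0 n1 cW cE; have [NW NE _ _] := closNS.
case/orP: (cell_good tmp Hd1 He1 n1) => Xc.
  by rewrite -(filter_head2 s1 _ Xc) // N0.
by rewrite -(filter_head2 s1 _ Xc) // N0.
Qed.

Lemma hpenult (h : seq (cell T)) (c : cell T) : 1 < size h -> nth CO h (size h - 1) = CV (vS T) ->
  nth CO h (size h - 2) != CO ->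
  nth CO (filter closW h) (size (filter closW h) - 2) = c ->
  nth CO (filter closE h) (size (filter closE h) - 2) = c -> nth CO h (size h - 2) = c.
Proof.
move=> s1 S0 n1 cW cE; have [_ _ SW SE] := closNS.
case/orP: (cell_good tmp Hd1 He1 n1) => Xc.
  by rewrite -(filter_tail2 s1 _ Xc) // S0.
by rewrite -(filter_tail2 s1 _ Xc) // S0.
Qed.

End Main.

Lemma idx_neq (A : eqType) (s : seq A) x y : x \in s -> x != y -> index x s != index y s.
Proof.
move=> xI xy; apply/eqP => E; case yI: (y \in s).
  by move/eqP: xy; apply; rewrite -(nth_index x xI) E nth_index.
by move: xI; rewrite -index_mem E index_mem yI.
Qed.

Lemma finish (T : tdata) (h : seq (cell T)) a b x y : uniq h ->
  nth (CO T) h 0 = CV (vN T) -> nth (CO T) h (size h - 1) = CV (vS T) ->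
  index (CO T) h = (index a h).+1 -> index b h = (index (CO T) h).+1 -> (index b h).+1 < size h ->
  index a h < index x h -> x != CO T -> x \in h ->
  index y h < index b h -> y != CO T -> y \in h ->
  [/\ before h (CV (vN T)) (CO T), before h (CO T) x, before h y (CO T) & before h (CO T) (CV (vS T))].
Proof.
move=> uh N0 S0 iO ib sb ax xO xI yb yO yI.
have s0 : 0 < size h by apply: leq_ltn_trans sb.
have OI : CO T \in h by rewrite -index_mem (ltn_trans _ sb) // ib ltnW.
rewrite /before; split.
- by rewrite -N0 index_uniq // iO.
- by rewrite ltn_neqAle eq_sym idx_neq // ?eq_sym // iO.
- by rewrite ltn_neqAle idx_neq // -ltnS -ib.
- rewrite -S0 index_uniq ?subn1 ?prednK ?leqnn //.
  rewrite -ltnS prednK //; apply: ltn_trans sb; by rewrite ib.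
Qed.

Lemma CE_inj (T : tdata) (e e' : Eg T) : CE e = CE e' -> e = e'.
Proof. by case. Qed.

Theorem lemma5p5 (T : tdata) (h0 h1 : seq (cell T)) :
  template T -> SZS_pair h0 h1 ->
  forall iota : bool,
    let hi := if iota then h1 else h0 in
    let hj := if iota then h0 else h1 in
    [/\ before hj (CV (vN T)) (CO T),
        before hj (CO T) (nth (CO T) hi 1),
        before hj (nth (CO T) hi (size hi - 2)) (CO T)
      & before hj (CO T) (CV (vS T))].
Proof.
move=> tmp [[u0 u1] [a0 a1] W E inf] iota.
move: W E; rewrite /SZ_pair /ZS_pair => -[hW1 hW0] [hE0 hE1].
case/dp_struct: (dWE tmp) => x [q [EWE _ _ _ _]].
case/dp_struct: (dEW tmp) => y [r [EEW _ _ _ _]].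
have Hd1 : ohead (WE T) = Some x by rewrite EWE.
have Hdk : ohead (rev (WE T)) = Some (last x q) by rewrite EWE lastI rev_rcons.
have He1 : ohead (EW T) = Some y by rewrite EEW.
have Hem : ohead (rev (EW T)) = Some (last y r) by rewrite EEW lastI rev_rcons.
move: (last x q) (last y r) Hdk Hem => dk em Hdk Hem.
case: (inf _ _ _ _ Hd1 Hdk He1 Hem) => inf0 inf1.
have [[nW1 nW2 nW3 nW4] [nE1 nE2 nE3 nE4]] := faceSep tmp Hd1 Hdk He1 Hem.
have cov : forall c, c != CO T -> closW c || closE c.
  by move=> c hc; apply: (cell_good tmp Hd1 He1).
have d1I := d1I Hd1; have e1I := e1I He1; have dkI := dkI Hdk; have emI := emI Hem.
have mD : forall d, d \in WE T -> closW (CE (edg d)) && closE (CE (edg d)).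
  by move=> d dI; rewrite /= merE_of // /merD dI.
have mDE : forall d, d \in EW T -> closW (CE (edg d)) && closE (CE (edg d)).
  by move=> d dI; rewrite /= merE_of // /merD dI orbT.
have /andP [mWd1 mEd1] := mD _ d1I; have /andP [mWdk mEdk] := mD _ dkI.
have /andP [mWe1 mEe1] := mDE _ e1I; have /andP [mWem mEem] := mDE _ emI.
have neN : CE (edg x) != CE (edg y).
  by apply/eqP => /CE_inj E; apply: (t_disj_e tmp d1I e1I E).
have neS : CE (edg dk) != CE (edg em).
  by apply/eqP => /CE_inj E; apply: (t_disj_e tmp dkI emI E).
have t0W1 := hp_first tmp hW0 mWe1 (fe1 tmp He1) (ve1 tmp He1) nW2.
have t0E1 := hp_first tmp hE0 mEe1 (fe1 tmp He1) (ve1 tmp He1) nE2.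
have t1W1 := hp_first tmp hW1 mWd1 (fd1 tmp Hd1) (vd1 tmp Hd1) nW1.
have t1E1 := hp_first tmp hE1 mEd1 (fd1 tmp Hd1) (vd1 tmp Hd1) nE1.
have t0W2 := hp_lastE tmp hW0 mWdk (fdk tmp Hdk) (vdk tmp Hdk) nW3.
have t0E2 := hp_lastE tmp hE0 mEdk (fdk tmp Hdk) (vdk tmp Hdk) nE3.
have t1W2 := hp_lastE tmp hW1 mWem (fem tmp Hem) (vem tmp Hem) nW4.
have t1E2 := hp_lastE tmp hE1 mEem (fem tmp Hem) (vem tmp Hem) nE4.
have [N0 S0 f0 g0 [i01 i02]] := hends u0 hW0 hE0 cov inf0.
have [N1 S1 f1 g1 [i11 i12]] := hends u1 hW1 hE1 cov inf1.
have inF : forall (h : seq (cell T)) (X : pred (cell T)) c, (forall c, c \in h) -> X c -> c \in filter X h.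
  by move=> h X c all Xc; rewrite mem_filter Xc all.
have r9 : index (CF (fac (alpha y))) h1 < index (CE (edg y)) h1.
  apply: (filter_mono u1 (inF _ _ _ a1 _) (inF _ _ _ a1 mWe1)).
    exact: (inWf_e1 tmp Hd1 He1).
  apply: (hp_notfirst tmp hW1 mWe1 (fe1 tmp He1) (ve1 tmp He1)).
  by rewrite t1W1.
have r10 : index (CF (fac x)) h0 < index (CE (edg x)) h0.
  apply: (filter_mono u0 (inF _ _ _ a0 _) (inF _ _ _ a0 mWd1)).
    by apply/existsP; exists x; rewrite d1I connect0.
  apply: (hp_notfirst tmp hW0 mWd1 (fd1 tmp Hd1) (vd1 tmp Hd1)).
  by rewrite t0W1 eq_sym.
have r11 : index (CE (edg dk)) h1 < index (CF (fac (alpha dk))) h1.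
  apply: (filter_mono u1 (inF _ _ _ a1 mEdk) (inF _ _ _ a1 _)); last first.
    apply: (hp_notlast tmp hE1 mEdk (fdk tmp Hdk) (vdk tmp Hdk)).
    by rewrite t1E2 eq_sym.
  by apply/existsP; exists dk; rewrite dkI connect0.
have r12 : index (CE (edg em)) h0 < index (CF (fac em)) h0.
  apply: (filter_mono u0 (inF _ _ _ a0 mEem) (inF _ _ _ a0 _)); last first.
    apply: (hp_notlast tmp hE0 mEem (fem tmp Hem) (vem tmp Hem)).
    by rewrite t0E2.
  by apply/existsP; exists dk; rewrite dkI (RS1 tmp Hdk Hem).
have gen : forall (h : seq (cell T)) a b, uniq h -> 0 < index a h ->
    index (CO T) h = (index a h).+1 -> index b h = (index (CO T) h).+1 -> (index b h).+1 < size h ->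
    [/\ 1 < size h, nth (CO T) h 1 != CO T & nth (CO T) h (size h - 2) != CO T].
  move=> h a b uh a0' iO ib sb.
  have s1 : 1 < size h by apply: leq_ltn_trans sb; rewrite ib iO.
  split => //; apply/eqP => E.
    by have := index_uniq (CO T) s1 uh; rewrite E iO => -[] a0E; move: a0'; rewrite a0E.
  have s2 : size h - 2 < size h by rewrite ltn_subrL /= (ltn_trans _ s1).
  have := index_uniq (CO T) s2 uh; rewrite E => I.
  move: sb; rewrite ib I.
  have -> : (size h - 2).+2 = size h by rewrite -addn2 subnK.
  by rewrite ltnn.
have [s01 n01 n02] := gen _ _ _ u0 f0 i01 i02 g0.
have [s11 n11 n12] := gen _ _ _ u1 f1 i11 i12 g1.
have sec0 := hsecond tmp Hd1 Hdk He1 s01 N0 n01 t0W1 t0E1.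
have sec1 := hsecond tmp Hd1 Hdk He1 s11 N1 n11 t1W1 t1E1.
have pen0 := hpenult tmp Hd1 Hdk He1 s01 S0 n02 t0W2 t0E2.
have pen1 := hpenult tmp Hd1 Hdk He1 s11 S1 n12 t1W2 t1E2.
case: iota => /=.
- by rewrite sec1 pen1; apply: (finish u0 N0 S0 i01 i02 g0 r10).
- by rewrite sec0 pen0; apply: (finish u1 N1 S1 i11 i12 g1 r9).
Qed.
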